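(* Fix a positive integer $k$. Then the sequence $(\Gamma(n^k,(n+1)^k))_{n\ge 1}$ is eventually $1,2,1,2,\ldots$ (alternating between $1$ and $2$). More precisely, let $g(x)$ be the remainder of the polynomial $\left(\sum_{i=1}^k x^{i-1}\right)^k$ upon division by $x^k$ (i.e., the sum of its terms of degree less than $k$). When $k$ is odd, let $M_k$ be the smallest positive integer such that $0<n^k-g(n)<n^k$ and $0<g(-n)<n^k$ for all integers $n\ge M_k$; when $k$ is even, let $M_k$ be the smallest positive integer such that $0<n^k+g(-n)<n^k$ and $0<g(n)<n^k$ for all integers $n\ge M_k$. Then the sequence $(\Gamma(n^k,(n+1)^k))_{n\ge 1}$ alternates between $1$ and $2$ from some index $n\le M_k+1$ onward.
   Context: For relatively prime positive integers $p,q$, exactly one of the equations $px+qy=\frac{(p-1)(q-1)}{2}$ (Equation 1) and $px+qy+1=\frac{(p-1)(q-1)}{2}$ (Equation 2) has a solution in nonnegative integers $(x,y)$. For positive integers $a,b$ with $d=\gcd(a,b)$, $\Gamma(a,b)=1$ if Equation 1 with $(p,q)=(a/d,b/d)$ has a nonnegative integer solution, and $\Gamma(a,b)=2$ otherwise. *)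

(* Defs.v *)
From HB Require Import structures.
From mathcomp Require Import all_boot all_order all_algebra.
From Stdlib Require Import ClassicalDescription.
Set Implicit Arguments. Unset Strict Implicit. Unset Printing Implicit Defensive.
Import Order.TTheory GRing.Theory Num.Theory.

Definition Gamma (a b : nat) : nat :=
  let d := gcdn a b in
  let p := a %/ d in
  let q := b %/ d in
  if excluded_middle_informative
       (exists x y : nat, p * x + q * y = (p - 1) * (q - 1) %/ 2)
  then 1 else 2.

Definition gpoly (k : nat) : {poly int} :=
  (((\sum_(1 <= i < k.+1) 'X^(i.-1)) ^+ k) %% 'X^k)%R.

Definition Mprop (k M : nat) : Prop :=
  forall n : nat, (M <= n)%N ->
    let N : int := ((n%:Z) ^+ k)%R in
    if odd k then
      (0 < N - (gpoly k).[n%:Z] < N)%R /\ (0 < (gpoly k).[- n%:Z] < N)%R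
    else
      (0 < N + (gpoly k).[- n%:Z] < N)%R /\ (0 < (gpoly k).[n%:Z] < N)%R.

Definition is_Mk (k M : nat) : Prop :=
  (0 < M)%N /\ Mprop k M /\ (forall m : nat, (0 < m)%N -> Mprop k m -> (M <= m)%N).

Definition alternates_from (k n0 : nat) : Prop :=
  forall n : nat, (n0 <= n)%N ->
    Gamma (n ^ k) (n.+1 ^ k) \in [:: 1%N; 2%N] /\
    Gamma (n ^ k) (n.+1 ^ k) != Gamma (n.+1 ^ k) (n.+2 ^ k).

(* Main.v *)
Require Import Defs.
From HB Require Import structures.
From mathcomp Require Import all_boot all_order all_algebra.
From mathcomp Require Import zify ring lra.
From Stdlib Require Import ClassicalDescription.
Set Implicit Arguments. Unset Strict Implicit. Unset Printing Implicit Defensive.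
Import Order.TTheory GRing.Theory Num.Theory.

Lemma gamma_crit p q u t : (1 < p)%N -> odd p -> coprime p q -> (u < p)%N ->
  u * q = 1 + t * p -> Gamma p q = if odd u then 1 else 2.
Proof.
move=> p1 op cpq up E.
rewrite /Gamma (eqP cpq) !divn1.
have [a pa] : exists a, p = 2 * a + 1 by exists p./2; lia.
have a1 : (0 < a)%N by lia.
have q1 : (0 < q)%N by case: q E {cpq}; lia.
have [q' qq] : exists q', q = q'.+1 by exists q.-1; lia.
have -> : (p - 1) * (q - 1) %/ 2 = a * q'.
  by rewrite pa qq addnK subSS subn0 -mulnA mulKn.
case: excluded_middle_informative => [[x [y Exy]] | nE].
- case ou: (odd u) => //.
  have y_lt : (2 * y + 1 < p)%N.
    have : (q * y <= a * q')%N by lia.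
    rewrite qq => H.
    have : (y < a)%N.
      rewrite ltnNge; apply/negP => Hy.
      have : (a * q'.+1 <= q'.+1 * y)%N by rewrite mulnC leq_mul2l Hy orbT.
      lia.
    lia.
  have id : 2 * y + 1 + p * (2 * x * u + 2 * y * t + u + t) = u + p * u * q.
    have H1 := congr1 (muln (2*u)) Exy.
    have H2 := congr1 (muln (2*y+1)) E.
    rewrite pa qq in H1 H2 *; lia.
  have : (2 * y + 1) %% p = u %% p.
    rewrite -(modnMDl (2 * x * u + 2 * y * t + u + t) (2*y+1) p)
            -(modnMDl (u * q) u p); congr (_ %% p); nia.
  rewrite !modn_small //; lia.
- case ou: (odd u) => //.
  exfalso; apply: nE.
  have [y uy] : exists y, u = 2 * y + 1 by exists u./2; lia.
  have tq : (t <= q')%N.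
    have : (t * p < q * p)%N.
      have : (u * q < p * q)%N by rewrite ltn_pmul2r.
      rewrite [p * q]mulnC; lia.
    rewrite ltn_mul2r qq; lia.
  have [r qr] : exists r, q' = t + r by exists (q' - t); lia.
  have Hr : p * r + 2 * q * y = 2 * a * q'.
    rewrite uy pa qq qr in E *; lia.
  have er : ~~ odd r.
    apply/negP => orr.
    have : odd (p * r) by rewrite oddM op orr.
    have -> : p * r = 2 * (a * q' - q * y) by lia.
    by rewrite oddM.
  exists (r./2), y.
  have rh : r = 2 * r./2 by lia.
  rewrite rh in Hr; lia.
Qed.

Lemma Gamma_sym p q : Gamma p q = Gamma q p.
Proof.
rewrite /Gamma gcdnC.
set d := gcdn q p.
do 2 case: excluded_middle_informative => //.
- move=> nE [x [y E]]; exfalso; apply: nE; exists y, x; rewrite mulnC; lia.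
- move=> [x [y E]] nE; exfalso; apply: nE; exists y, x; rewrite mulnC; lia.
Qed.

Lemma gamma_crit' p q v t : (1 < q)%N -> odd q -> coprime p q -> (v < q)%N ->
  v * p = 1 + t * q -> Gamma p q = if odd v then 1 else 2.
Proof.
move=> q1 oq cpq vq E; rewrite Gamma_sym; apply: (gamma_crit (t:=t)) => //.
by rewrite coprime_sym.
Qed.

Local Open Scope ring_scope.

Definition spoly (k : nat) : {poly int} := \sum_(1 <= i < k.+1) 'X^(i.-1).

Lemma spoly_poly k : spoly k = \poly_(i < k) 1.
Proof.
rewrite poly_def /spoly big_add1 /= big_mkord; apply: eq_bigr => i _.
by rewrite scale1r.
Qed.

Lemma coef_spoly k i : (spoly k)`_i = (i < k)%N%:R.
Proof. by rewrite spoly_poly coef_poly; case: ifP. Qed.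

Lemma coef_spolyX_ge0 k m i : 0 <= (spoly k ^+ m)`_i.
Proof.
elim: m i => [|m IH] i; first by rewrite expr0 coef1; case: (i == 0)%N.
rewrite exprS coefM; apply: sumr_ge0 => j _; apply: mulr_ge0 => //.
by rewrite coef_spoly ler0n.
Qed.

Lemma coef0_spolyX k m : (0 < k)%N -> (spoly k ^+ m)`_0 = 1.
Proof.
move=> k0; elim: m => [|m IH]; first by rewrite expr0 coef1.
by rewrite exprS coef0M IH coef_spoly k0 mulr1.
Qed.

Lemma coef_top k : (0 < k)%N -> 1 <= (spoly k ^+ k)`_k.-1.
Proof.
case: k => // k _ /=.
rewrite exprS coefM big_ord_recr /= subnn coef0_spolyX // coef_spoly ltnSn mulr1.
rewrite -[X in X <= _]add0r lerD2r; apply: sumr_ge0 => j _; apply: mulr_ge0.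
  by rewrite coef_spoly ler0n.
exact: coef_spolyX_ge0.
Qed.

Lemma gpoly_take k : gpoly k = take_poly k (spoly k ^+ k).
Proof. by rewrite Pdiv.IdomainMonic.take_poly_modp. Qed.

Lemma coef_gpoly_ge0 k i : 0 <= (gpoly k)`_i.
Proof. rewrite gpoly_take coef_take_poly; case: ifP => // _; exact: coef_spolyX_ge0. Qed.

Lemma coef_gpoly_top k : (0 < k)%N -> 1 <= (gpoly k)`_k.-1.
Proof. move=> k0; rewrite gpoly_take coef_take_poly ltn_predL k0; exact: coef_top. Qed.

Lemma size_gpoly k : (size (gpoly k) <= k)%N.
Proof. rewrite gpoly_take; exact: size_take_poly. Qed.

Lemma G_diff (P : {poly int}) (x y : int) : exists r, P.[x] - P.[y] = (x - y) * r.
Proof.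
have : root (P - P.[y]%:P) y by rewrite /root !hornerE subrr.
move/factor_theorem => [Q HQ]; exists Q.[x].
have := congr1 (horner^~ x) HQ; rewrite /= !hornerE => ->; ring.
Qed.

Lemma spoly_mul k : (1 - 'X) * spoly k = 1 - 'X^k.
Proof.
elim: k => [|k IH]; first by rewrite /spoly big_geq // mulr0 expr0 subrr.
rewrite /spoly big_nat_recr //= mulrDr.
rewrite /spoly in IH; rewrite IH exprS; ring.
Qed.

Lemma gpoly_congr k : exists W : {poly int}, (1 - 'X)^+k * gpoly k = 1 + 'X^k * W.
Proof.
have mX : ('X^k : {poly int}) \is monic by apply: monicXn.
have E := Pdiv.IdomainMonic.divp_eq mX (spoly k ^+ k).
have H : (1 - 'X)^+k * spoly k ^+ k = (1 - 'X^k)^+k by rewrite -exprMn spoly_mul.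
have H2 := subrXX (1 : {poly int}) (1 - 'X^k) k.
set S := \sum_(i < k) _ in H2.
exists (- S - (1 - 'X)^+k * (spoly k ^+ k %/ 'X^k)).
rewrite /gpoly.
have -> : spoly k ^+ k %% 'X^k = spoly k ^+ k - (spoly k ^+ k %/ 'X^k) * 'X^k.
  by rewrite {2}E; ring.
rewrite mulrBr H.
have -> : (1 - 'X^k)^+k = 1 - (1 - (1 - 'X^k)) * S by rewrite -H2 expr1n; ring.
ring.
Qed.

Lemma G_congr k (x : int) : exists w : int, (1 - x)^+k * (gpoly k).[x] = 1 + x^+k * w.
Proof.
have [W HW] := gpoly_congr k.
exists W.[x].
have := congr1 (horner^~ x) HW.
by rewrite /= !hornerE.
Qed.


Lemma bounds k' (n : int) : let k := k'.+1 in let a i := (gpoly k)`_i in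
  1 <= n -> (gpoly k).[1] < n ->
  [/\ 0 < (gpoly k).[n], (gpoly k).[n] < n ^+ k, `|(gpoly k).[- n]| <= (gpoly k).[n],
      (~~ odd k' -> 0 < (gpoly k).[- n]) & (odd k' -> (gpoly k).[- n] < 0)].
Proof.
move=> k a n1 Sn.
have hc x : (gpoly k).[x] = \sum_(i < k) a i * x ^+ i by apply: horner_coef_wide; exact: size_gpoly.
have a0 i : 0 <= a i by apply: coef_gpoly_ge0.
have atop : 1 <= a k' by apply: (coef_gpoly_top (k:=k)).
have n0 : 0 < n by exact: lt_le_trans ltr01 n1.
have nk0 : 0 < n ^+ k' by apply: exprn_gt0.
set S := (gpoly k).[1] in Sn.
have SE : S = \sum_(i < k) a i by rewrite /S hc; apply: eq_bigr => i _; rewrite expr1n mulr1.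
have SE' : \sum_(i < k') a i <= S.
  rewrite SE big_ord_recr /= -[X in X <= _]addr0 lerD2l; exact: a0.
have S0 : 0 <= S by rewrite SE; apply: sumr_ge0.
have Gnle : (gpoly k).[n] <= S * n ^+ k'.
  rewrite hc SE mulr_suml; apply: ler_sum => i _; apply: ler_wpM2l => //.
  by apply: ler_weXn2l => //; rewrite -ltnS.
have Gnlt : (gpoly k).[n] < n ^+ k.
  apply: (le_lt_trans Gnle); by rewrite exprS ltr_pM2r.
set T := \sum_(i < k') a i * n ^+ i.
have Tlt : T < n ^+ k'.
  have : n * T <= S * n ^+ k'.
    rewrite /T mulr_sumr; apply: (le_trans _ (ler_wpM2r (ltW nk0) SE')).
    rewrite mulr_suml; apply: ler_sum => i _.
    rewrite mulrCA -exprS; apply: ler_wpM2l => //; apply: ler_weXn2l => //.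
  move=> H; have : n * T < n * n ^+ k' by by apply: (le_lt_trans H); rewrite ltr_pM2r.
  by rewrite ltr_pM2l.
have T0 : 0 <= T by apply: sumr_ge0 => i _; apply: mulr_ge0 => //; apply: exprn_ge0; apply: ltW.
have Gnsplit : (gpoly k).[n] = T + a k' * n ^+ k' by rewrite hc big_ord_recr.
have Gpos : 0 < (gpoly k).[n].
  rewrite Gnsplit; apply: (lt_le_trans nk0).
  rewrite -[X in X <= _]add0r lerD //; rewrite -[X in X <= _]mul1r; apply: ler_wpM2r => //; exact: ltW.
set R := \sum_(i < k') a i * (- n) ^+ i.
have RT : `|R| <= T.
  apply: (le_trans (ler_norm_sum _ _ _)); apply: ler_sum => i _.
  by rewrite normrM normrX normrN (ger0_norm (a0 _)) (gtr0_norm n0).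
have Gmsplit : (gpoly k).[- n] = R + a k' * (- n) ^+ k' by rewrite hc big_ord_recr.
have ank : n ^+ k' <= a k' * n ^+ k'.
  rewrite -[X in X <= _]mul1r; apply: ler_wpM2r => //; exact: ltW.
split => //.
- rewrite !hc; apply: (le_trans (ler_norm_sum _ _ _)); apply: ler_sum => i _.
  by rewrite normrM normrX normrN (ger0_norm (a0 _)) (gtr0_norm n0).
- move=> ok; rewrite Gmsplit exprNn -signr_odd (negbTE ok) expr0 mul1r.
  have : - `|R| <= R by rewrite lerNnormlW.
  lia.
- move=> ok; rewrite Gmsplit exprNn -signr_odd ok expr1 mulN1r mulrN.
  have : R <= `|R| by apply: ler_norm.
  lia.
Qed.


Lemma PoszX' n k : Posz (n ^ k) = (Posz n) ^+ k.
Proof. by rewrite -[Posz (n^k)]natz natrX natz. Qed.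

Lemma pow_gt1 n k : (1 < n)%N -> (0 < k)%N -> (1 < n ^ k)%N.
Proof.
move=> n1; case: k => // k _; rewrite expnS.
have := expn_gt0 n k; rewrite (ltn_trans _ n1) // => h; nia.
Qed.

Lemma int_to_nat (U t : int) (p q : nat) : 0 < U -> (0 < p)%N -> (0 < q)%N ->
  q%:Z * U = 1 + t * p%:Z -> exists u t' : nat, U = u%:Z /\ (u * q = 1 + t' * p)%N.
Proof.
move=> U0 p0 q0 E.
have t0 : 0 <= t.
  have : 0 <= t * p%:Z.
    have : 1 <= q%:Z * U.
      have : 1 <= q%:Z by lia.
      move=> h; rewrite -[1]mulr1; apply: ler_pM => //; lia.
    lia.
  by rewrite pmulr_lge0 //; lia.
exists `|U|%N, `|t|%N; split; first lia.
apply/eqP; rewrite -eqz_nat PoszD !PoszM !gez0_abs //; last lia.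
by rewrite mulrC E.
Qed.

Lemma G_par k (x m : int) : x - 1 = 2 * m -> exists r, (gpoly k).[x] = (gpoly k).[1] + 2 * r.
Proof.
move=> hx; have [r Hr] := G_diff (gpoly k) x 1.
exists (m * r); rewrite mulrA -hx -Hr; ring.
Qed.

Lemma G1_pos k : (0 < k)%N -> 0 < (gpoly k).[1].
Proof.
case: k => // k' _.
rewrite (horner_coef_wide _ (size_gpoly k'.+1)) big_ord_recr /= expr1n mulr1.
apply: (lt_le_trans ltr01); rewrite -[X in X <= _]add0r; apply: lerD.
  by apply: sumr_ge0 => i _; rewrite expr1n mulr1; apply: coef_gpoly_ge0.
exact: (coef_gpoly_top (k := k'.+1)).
Qed.

Lemma Mprop_exists k : (0 < k)%N -> Mprop k (`|(gpoly k).[1]|%N.+1).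
Proof.
case: k => // k' _ n Hn /=.
have n1 : 1 <= n%:Z by lia.
have Sn : (gpoly k'.+1).[1] < n%:Z by have := G1_pos (ltn0Sn k'); lia.
have [A B C D E] := bounds n1 Sn.
case Ok: (odd k'); rewrite /=.
- have := E Ok; lia.
- have := D (negbT Ok); lia.
Qed.


Lemma gamma_val k M n : (0 < k)%N -> Mprop k M -> (M <= n)%N -> (2 <= n)%N ->
  Gamma (n ^ k) (n.+1 ^ k) =
  if odd `|(gpoly k).[1]| (+) odd n (+) odd k then 1%N else 2%N.
Proof.
move=> k0 hM Mn n2.
have cop : coprime (n ^ k) (n.+1 ^ k) by rewrite coprimeXl // coprimeXr // coprimenS.
have pE : Posz (n ^ k) = n%:Z ^+ k by rewrite PoszX'.
have qE : Posz (n.+1 ^ k) = (1 + n%:Z) ^+ k by rewrite PoszX' -addn1 PoszD addrC.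
have p1 : (1 < n ^ k)%N by apply: pow_gt1.
have q1 : (1 < n.+1 ^ k)%N by apply: pow_gt1 => //; lia.
case On: (odd n).
- move: (hM n Mn) => /= hb.
  have [w Hw] := G_congr k (- n%:Z); rewrite opprK in Hw.
  have [r Hr] : exists r, (gpoly k).[- n%:Z] = (gpoly k).[1] + 2 * r.
    apply: (@G_par _ _ (- (Posz (n./2).+1))); lia.
  have op : odd (n ^ k) by rewrite oddX On orbT.
  have [U [t [U0 UN HU Upar]]] : exists U t : int, [/\ 0 < U, U < n%:Z ^+ k,
      (1 + n%:Z) ^+ k * U = 1 + t * n%:Z ^+ k &
      exists r', U = (gpoly k).[1] + (~~ odd k)%:Z + 2 * r'].
    case Ok: (odd k) hb => -[/andP[h1 h2] /andP[h3 h4]].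
    + exists ((gpoly k).[- n%:Z]), (- w); split => //.
      * rewrite Hw exprNn -signr_odd Ok expr1; ring.
      * by exists r; rewrite Hr /=; ring.
    + exists (n%:Z ^+ k + (gpoly k).[- n%:Z]), (w + (1 + n%:Z) ^+ k); split => //.
      * transitivity ((1 + n%:Z)^+k * n%:Z^+k + (1 + n%:Z)^+k * (gpoly k).[- n%:Z]); first ring.
        rewrite Hw exprNn -signr_odd Ok expr0; ring.
      * exists (r + (n ^ k)./2); rewrite Hr -pE /=; lia.
  rewrite -pE -qE in UN HU.
  have [u [t' [Uu Hut]]] := int_to_nat U0 (ltnW p1) (ltnW q1) HU.
  rewrite (gamma_crit (u := u) (t := t')) //; last by lia.
  case: Upar => r' Hr'.
  have G0 := G1_pos k0.
  congr (if _ then _ else _).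
  case Ok: (odd k) Hr' => /= Hr'; lia.
- move: (hM n.+1 (leqW Mn)) => /= hb.
  have [w Hw] := G_congr k (Posz n.+1).
  have [r Hr] : exists r, (gpoly k).[Posz n.+1] = (gpoly k).[1] + 2 * r.
    apply: (@G_par _ _ (Posz n./2)); lia.
  have oq : odd (n.+1 ^ k) by rewrite oddX /= On orbT.
  have e1 : 1 - Posz n.+1 = - n%:Z by lia.
  rewrite e1 in Hw.
  have [U [t [U0 UN HU Upar]]] : exists U t : int, [/\ 0 < U, U < (1 + n%:Z) ^+ k,
      n%:Z ^+ k * U = 1 + t * (1 + n%:Z) ^+ k &
      exists r', U = (gpoly k).[1] + (odd k)%:Z + 2 * r'].
    have e2 : Posz n.+1 = 1 + n%:Z by lia.
    case Ok: (odd k) hb => -[/andP[h1 h2] /andP[h3 h4]].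
    + exists ((Posz n.+1) ^+ k - (gpoly k).[Posz n.+1]), (n%:Z ^+ k + w); split.
      * lia.
      * rewrite -e2; lia.
      * move: Hw; rewrite exprNn -signr_odd Ok expr1 e2 => Hw.
        rewrite -e2 mulrBr; rewrite e2; lia.
      * exists (Posz ((n.+1 ^ k)./2) - r - (gpoly k).[1]); rewrite Hr /=.
        rewrite -PoszX'; lia.
    + exists ((gpoly k).[Posz n.+1]), w; split.
      * done.
      * by rewrite -e2.
      * move: Hw; rewrite exprNn -signr_odd Ok expr0 mul1r e2 => Hw.
        by rewrite Hw; ring.
      * by exists r; rewrite Hr /=; ring.
  rewrite -pE -qE in UN HU.
  have [u [t' [Uu Hut]]] := int_to_nat U0 (ltnW q1) (ltnW p1) HU.
  rewrite (gamma_crit' (v := u) (t := t')) //; last by lia.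
  case: Upar => r' Hr'.
  have G0 := G1_pos k0.
  congr (if _ then _ else _).
  case Ok: (odd k) Hr' => /= Hr'; lia.
Qed.

Lemma alt_from k M : (0 < k)%N -> Mprop k M -> alternates_from k (maxn M 2).
Proof.
move=> k0 hM n; rewrite geq_max => /andP[Mn n2].
rewrite (gamma_val k0 hM Mn n2) (gamma_val k0 hM (leqW Mn) (leqW n2)) /=.
by case: (odd `|(gpoly k).[1]|); case: (odd n); case: (odd k).
Qed.

Local Close Scope ring_scope.

Theorem theorem1p5 (k : nat) (hk : (0 < k)%N) :
  (exists n0 : nat, (1 <= n0)%N /\ alternates_from k n0) /\
  (forall M : nat, is_Mk k M ->
     exists n0 : nat, (1 <= n0)%N /\ (n0 <= M.+1)%N /\ alternates_from k n0).
Proof.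
split.
- exists (maxn (`|((gpoly k).[1])%R|%N.+1) 2); split; first by rewrite leq_max orbT.
  exact: alt_from hk (Mprop_exists hk).
- move=> M [M0 [hM _]]; exists (maxn M 2); split; first by rewrite leq_max orbT.
  split; last exact: alt_from.
  by rewrite geq_max ltnW //=; lia.
Qed.
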